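(* A topological partial action is free if and only if its enveloping action is free.
   Context: A topological partial action $\tau=(\{Y_t\}_{t\in H},\{\tau_t\}_{t\in H})$ of a topological group $H$ on a space $Y$: open $Y_t\subseteq Y$, homeomorphisms $\tau_t\colon Y_{t^{-1}}\to Y_t$, $Y_e=Y$, $\tau_e=\mathrm{id}$, $\tau_s(Y_{s^{-1}}\cap Y_t)=Y_s\cap Y_{st}$, $\tau_s\tau_t=\tau_{st}$ on $Y_{t^{-1}}\cap Y_{t^{-1}s^{-1}}$, with $\{(t,y):y\in Y_{t^{-1}}\}$ open and $(t,y)\mapsto\tau_t(y)$ continuous. It is free if for all $t\neq e$ the set $\{y\in Y_{t^{-1}}:\tau_t(y)=y\}$ is empty (for a global action, $Y_t=Y$ for all $t$). The enveloping action $\tau^e$ is (up to isomorphism) the global action of $H$ on a space $Y^e$ such that $Y$ is open in $Y^e$, $Y_t=Y\cap\tau^e_t(Y)$, $\tau_t=\tau^e_t$ on $Y_{t^{-1}}$, and $Y^e=\bigcup_t\tau^e_t(Y)$. *)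

(* Defs.v *)
From HB Require Import structures.
From mathcomp Require Import all_boot all_algebra.
From mathcomp Require Import all_classical all_reals topology.
Set Implicit Arguments. Unset Strict Implicit. Unset Printing Implicit Defensive.
Local Open Scope classical_set_scope.

Definition is_topgroup (H : topologicalType) (mul : H -> H -> H)
  (inv : H -> H) (e : H) : Prop :=
  [/\ (forall a b c, mul a (mul b c) = mul (mul a b) c),
      (forall a, mul e a = a /\ mul a e = a),
      (forall a, mul (inv a) a = e /\ mul a (inv a) = e),
      continuous (fun p : H * H => mul p.1 p.2)
    & continuous inv].

(* Topological partial action ({D t}, {tau t}) of H on Y:
   D t is the domain Y_t, and tau t : Y_{t^-1} -> Y_t (its values outside
   Y_{t^-1} are irrelevant). *)
Definition partial_homeo (H Y : topologicalType) (inv : H -> H)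
  (D : H -> set Y) (tau : H -> Y -> Y) (t : H) : Prop :=
  [/\ (forall y, D (inv t) y -> D t (tau t y)),
      {within D (inv t), continuous (tau t)} &
      (exists g : Y -> Y, [/\ (forall y, D t y -> D (inv t) (g y)),
          (forall y, D (inv t) y -> g (tau t y) = y),
          (forall y, D t y -> tau t (g y) = y) &
          {within D t, continuous g}])].

Definition is_top_partial_action (H : topologicalType) (mul : H -> H -> H)
  (inv : H -> H) (e : H) (Y : topologicalType)
  (D : H -> set Y) (tau : H -> Y -> Y) : Prop :=
  [/\ (forall t, open (D t)) /\ (forall t, partial_homeo inv D tau t),
      D e = setT /\ (forall y, tau e y = y),
      (forall s t, tau s @` (D (inv s) `&` D t) = D s `&` D (mul s t)),
      (forall s t y, D (inv t) y -> D (mul (inv t) (inv s)) y ->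
          tau s (tau t y) = tau (mul s t) y)
    & (open [set p : H * Y | D (inv p.1) p.2] /\
       {within [set p : H * Y | D (inv p.1) p.2],
        continuous (fun p : H * Y => tau p.1 p.2)})].

Definition is_top_action (H : topologicalType) (mul : H -> H -> H)
  (e : H) (Z : topologicalType) (sigma : H -> Z -> Z) : Prop :=
  [/\ (forall z, sigma e z = z),
      (forall s t z, sigma s (sigma t z) = sigma (mul s t) z)
    & continuous (fun p : H * Z => sigma p.1 p.2)].

Definition partial_free (H Y : Type) (inv : H -> H) (e : H)
  (D : H -> set Y) (tau : H -> Y -> Y) : Prop :=
  forall t, t <> e -> forall y, D (inv t) y -> tau t y <> y.

Definition global_free (H Z : Type) (e : H) (sigma : H -> Z -> Z) : Prop :=
  forall t, t <> e -> forall z, sigma t z <> z.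

(* (Z, sigma) together with the open embedding iota : Y -> Z is an
   enveloping action of the partial action (D, tau): Y is identified with the
   open subset iota(Y) of Z, Y_t = Y ∩ sigma_t(Y), tau_t = sigma_t on
   Y_{t^-1}, and Z = ⋃_t sigma_t(Y). *)
Definition is_enveloping_action (H : topologicalType) (mul : H -> H -> H)
  (inv : H -> H) (e : H) (Y : topologicalType)
  (D : H -> set Y) (tau : H -> Y -> Y)
  (Z : topologicalType) (sigma : H -> Z -> Z) (iota : Y -> Z) : Prop :=
  [/\ is_top_action mul e sigma,
      [/\ injective iota, continuous iota &
         (forall U : set Y, open U -> open (iota @` U))],
      (forall t, iota @` D t = range iota `&` sigma t @` range iota),
      (forall t y, D (inv t) y -> sigma t (iota y) = iota (tau t y))
    & (forall z, exists t y, z = sigma t (iota y))].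

(* Main.v *)
Require Import Defs.
From mathcomp Require Import all_boot all_algebra.
From mathcomp Require Import all_classical all_reals topology.
Local Open Scope classical_set_scope.

Theorem proposition3p3 (H : topologicalType) (mul : H -> H -> H)
  (inv : H -> H) (e : H) (hH : is_topgroup mul inv e)
  (Y : topologicalType) (D : H -> set Y) (tau : H -> Y -> Y)
  (htau : is_top_partial_action mul inv e D tau)
  (Z : topologicalType) (sigma : H -> Z -> Z) (iota : Y -> Z)
  (henv : is_enveloping_action mul inv e D tau sigma iota) :
  partial_free inv e D tau <-> global_free e sigma.
Proof.
case: hH => assoc unit invax _ _.
case: henv => [[hid hcomp _] [hinj _ _] hD hst hcov].
split.
- move=> pf t te z hz.
  have [s [y zE]] := hcov z.
  set u := mul (inv s) (mul t s).
  have hu : sigma u (iota y) = iota y.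
    rewrite /u -hcomp -hcomp -zE hz zE hcomp (proj1 (invax s)) hid //.
  have ue : u <> e.
    move=> ue; apply: te.
    have h1 : mul t s = s.
      have := f_equal (mul s) ue.
      by rewrite /u assoc (proj2 (invax s)) (proj1 (unit _)) (proj2 (unit _)).
    have := f_equal (fun x => mul x (inv s)) h1.
    by rewrite /= -assoc (proj2 (invax s)) (proj2 (unit _)).
  have hv : sigma (inv u) (iota y) = iota y.
    by rewrite -{1}hu hcomp (proj1 (invax u)) hid.
  have : (range iota `&` sigma (inv u) @` range iota) (iota y).
    split; first by exists y.
    by exists (iota y); [exists y|].
  rewrite -hD => -[y' Dy' /hinj yE]; subst y'.
  apply: (pf u ue y Dy'); apply: hinj.
  by rewrite -hst.
- move=> gf t te y Dy ty.
  by apply: (gf t te (iota y)); rewrite hst // ty.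
Qed.
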